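(* Let $\mathcal{S}=\mathcal{S}_1\times\cdots\times\mathcal{S}_m$ with each $\mathcal{S}_i$ finite of cardinality $S_i$, and let $P,P'$ be probability measures on $\mathcal{S}$ with product form $P(y)=\prod_{i=1}^m P_i(y_i)$ and $P'(y)=\prod_{i=1}^m P'_i(y_i)$ for all $y=(y_1,\dots,y_m)\in\mathcal{S}$, where $P_i,P'_i$ are probability distributions on $\mathcal{S}_i$. Assume that for every $i\in[m]$ there exist $\xi_i,\xi'_i>0$ such that $|P'_i(y_i)-P_i(y_i)|\le\sqrt{P_i(y_i)\xi_i}+\xi'_i$ for all $y_i\in\mathcal{S}_i$. Then for every function $f:\mathcal{S}\to[0,\infty)$, $$\sum_{y\in\mathcal{S}}|P(y)-P'(y)|f(y)\le \max_{y\in\prod_{i=1}^m\mathrm{supp}(P_i)}f(y)\sum_{i=1}^m\sum_{y_i\in\mathcal{S}_i}\sqrt{P_i(y_i)\xi_i}\;+\;3\max_{y\in\mathcal{S}}f(y)\sum_{i=1}^m\xi'_iS_i .$$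
   Context: $\mathrm{supp}(P_i)=\{y_i\in\mathcal{S}_i: P_i(y_i)>0\}$. *)

(* Defs.v *)
From mathcomp Require Import all_boot all_order all_algebra.
Set Implicit Arguments. Unset Strict Implicit. Unset Printing Implicit Defensive.
Import Order.TTheory GRing.Theory Num.Theory.
Local Open Scope ring_scope.

Definition prodSpace (m : nat) (S : 'I_m -> finType) : finType :=
  {dffun forall i : 'I_m, S i}.

Definition is_distr (R : numDomainType) (T : finType) (p : T -> R) : Prop :=
  (forall x, 0 <= p x) /\ \sum_(x : T) p x = 1.

Definition prodMeasure (R : numDomainType) (m : nat) (S : 'I_m -> finType)
  (P : forall i : 'I_m, S i -> R) (y : prodSpace S) : R :=
  \prod_(i < m) P i (y i).

Definition in_prod_supp (R : numDomainType) (m : nat) (S : 'I_m -> finType)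
  (P : forall i : 'I_m, S i -> R) (y : prodSpace S) : bool :=
  [forall i, 0 < P i (y i)].

(* Main.v *)
Require Import Defs.
From mathcomp Require Import all_boot all_order all_algebra.
Import Order.TTheory GRing.Theory Num.Theory.
Local Open Scope ring_scope.

Lemma prod_sum (R : comNzRingType) (m : nat) (S : 'I_m -> finType)
  (F : forall i : 'I_m, S i -> R) :
  \sum_(y : prodSpace S) \prod_(i < m) F i (y i) = \prod_(i < m) \sum_(s : S i) F i s.
Proof.
pose G i := [ffun s : S i => F i s].
have -> : \sum_(y : prodSpace S) \prod_(i < m) F i (y i)
   = \sum_(t : fprod S) \prod_(i in 'I_m) G i (t i).
  rewrite (reindex (@dffun_of_fprod _ S)); last first.
    by apply: onW_bij; exact: dffun_of_fprod_bij.
  apply: eq_bigr => t _; apply: eq_bigr => i _; rewrite ffunE.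
  by rewrite /G ffunE.
rewrite big_fprod.
have := (bigA_distr_big_dep (fun i (j : {i : 'I_m & S i}) => tag j == i) (fun i j => untag 0 (G i) j)).
move=> <-.
apply: eq_bigr => i _.
transitivity (\sum_(s : S i) G i s); last by apply: eq_bigr => s _; rewrite ffunE.
rewrite (big_tag (fun i s => G i s) i).
by apply: eq_bigl.
Qed.

Lemma marg (R : comNzRingType) (m : nat) (S : 'I_m -> finType) (k : 'I_m)
  (g Q : forall i : 'I_m, S i -> R)
  (hQ : forall i, i != k -> \sum_(s : S i) Q i s = 1) :
  \sum_(y : prodSpace S) \prod_(i < m) (if i == k then g i (y i) else Q i (y i))
  = \sum_(s : S k) g k s.
Proof.
rewrite (@prod_sum _ _ _ (fun i s => if i == k then g i s else Q i s)).
rewrite (bigD1 k) //=; under eq_bigr do rewrite eqxx.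
rewrite [X in _ * X]big1 ?mulr1 // => i hik.
under eq_bigr do rewrite (negbTE hik).
exact: hQ.
Qed.

From mathcomp Require Import lra.

Theorem lemma2 (R : rcfType) (m : nat) (S : 'I_m -> finType)
  (P P' : forall i : 'I_m, S i -> R)
  (xi xi' : 'I_m -> R)
  (hP : forall i, is_distr (P i)) (hP' : forall i, is_distr (P' i))
  (hxi : forall i, 0 < xi i) (hxi' : forall i, 0 < xi' i)
  (hclose : forall i (yi : S i),
      `|P' i yi - P i yi| <= Num.sqrt (P i yi * xi i) + xi' i)
  (f : prodSpace S -> R) (hf : forall y, 0 <= f y) :
  \sum_(y : prodSpace S) `|prodMeasure P y - prodMeasure P' y| * f y
  <= (\big[Num.max/0]_(y : prodSpace S | in_prod_supp P y) f y)
       * (\sum_(i < m) \sum_(yi : S i) Num.sqrt (P i yi * xi i))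
     + 3 * (\big[Num.max/0]_(y : prodSpace S) f y)
       * (\sum_(i < m) xi' i * #|S i|%:R).
Proof.
set Ms := \big[Num.max/0]_(y | in_prod_supp P y) f y.
set M := \big[Num.max/0]_(y : prodSpace S) f y.
set A := \sum_(i < m) _.
set B := \sum_(i < m) _.
have P0 : forall i s, 0 <= P i s by move=> i s; case: (hP i) => h _; exact: h.
have P'0 : forall i s, 0 <= P' i s by move=> i s; case: (hP' i) => h _; exact: h.
have P1 : forall i, \sum_s P i s = 1 by move=> i; case: (hP i).
have P'1 : forall i, \sum_s P' i s = 1 by move=> i; case: (hP' i).
have M0 : 0 <= M by rewrite /M; elim/big_ind: _ => // x y hx hy; rewrite le_max hx.
have Ms0 : 0 <= Ms by rewrite /Ms; elim/big_ind: _ => // x y hx hy; rewrite le_max hx.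
have MsM : Ms <= M.
  by rewrite /Ms; apply: bigmax_le => // y _; apply: le_bigmax.
have A0 : 0 <= A by apply: sumr_ge0 => i _; apply: sumr_ge0 => s _; exact: sqrtr_ge0.
have B0 : 0 <= B.
  by apply: sumr_ge0 => i _; apply: mulr_ge0; [exact: ltW | exact: ler0n].
pose H (k : nat) (y : prodSpace S) :=
  \prod_(i < m) (if (i < k)%N then P i (y i) else P' i (y i)).
pose G (k : 'I_m) (y : prodSpace S) := \prod_(i < m)
  (if i == k then `|P i (y i) - P' i (y i)|
   else (if (i < k)%N then P i (y i) else P' i (y i))).
have step1 : forall y, prodMeasure P y - prodMeasure P' y
    = \sum_(k < m) (H k.+1 y - H k y).
  move=> y; rewrite -(big_mkord xpredT (fun k => H k.+1 y - H k y)).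
  rewrite telescope_sumr ?leq0n // ; congr (_ - _).
  - by rewrite /prodMeasure /H; apply: eq_bigr => i _; rewrite ltn_ord.
have step2 : forall (k : 'I_m) y, `|H k.+1 y - H k y| = G k y.
  move=> k y.
  have eH : forall j, H j y = (if (k < j)%N then P k (y k) else P' k (y k))
     * \prod_(i < m | i != k) (if (i < j)%N then P i (y i) else P' i (y i)).
    by move=> j; rewrite /H (bigD1 k).
  have eG : G k y = `|P k (y k) - P' k (y k)|
     * \prod_(i < m | i != k) (if (i < k)%N then P i (y i) else P' i (y i)).
    rewrite /G (bigD1 k) //= eqxx; congr (_ * _).
    by apply: eq_bigr => i hik; rewrite (negbTE hik).
  rewrite eG !eH ltnSn ltnn.
  have -> : \prod_(i < m | i != k) (if (i < k.+1)%N then P i (y i) else P' i (y i))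
     = \prod_(i < m | i != k) (if (i < k)%N then P i (y i) else P' i (y i)).
    apply: eq_bigr => i hik; rewrite ltnS leq_eqVlt.
    have -> : ((i : nat) == k) = false by apply/negbTE.
    by [].
  rewrite -mulrBl normrM; congr (_ * _).
  rewrite ger0_norm //; apply: prodr_ge0 => i _; by case: ifP.
have step3 : \sum_y `|prodMeasure P y - prodMeasure P' y|
     <= \sum_(k < m) \sum_(s : S k) `|P k s - P' k s|.
  apply: (le_trans (y := \sum_y \sum_(k < m) G k y)).
    apply: ler_sum => y _; rewrite step1.
    apply: (le_trans (ler_norm_sum _ _ _)).
    by apply: ler_sum => k _; rewrite step2.
  rewrite exchange_big /=; apply: ler_sum => k _; rewrite /G.
  rewrite (@marg _ _ _ k (fun i s => `|P i s - P' i s|) (fun i s => if (i < k)%N then P i s else P' i s)) //.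
  by move=> i _; case: (i < k)%N.
pose e (k : 'I_m) (y : prodSpace S) := \prod_(i < m)
  (if i == k then (P i (y i) == 0)%:R * P' i (y i) else P' i (y i)).
have e0 : forall k y, 0 <= e k y.
  move=> k y; apply: prodr_ge0 => i _; case: ifP => _ //.
  by apply: mulr_ge0.
have step4 : forall y, ~~ in_prod_supp P y ->
    prodMeasure P y = 0 /\ prodMeasure P' y <= \sum_(k < m) e k y.
  move=> y /forallPn [k hk].
  have hk0 : P k (y k) = 0.
    by apply/eqP; rewrite eq_le P0 andbT leNgt; exact: hk.
  split; first by rewrite /prodMeasure (bigD1 k) //= hk0 mul0r.
  have -> : prodMeasure P' y = e k y.
    rewrite /e /prodMeasure (bigD1 k) //= [RHS](bigD1 k) //= eqxx hk0 eqxx mul1r.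
    by congr (_ * _); apply: eq_bigr => i hik; rewrite (negbTE hik).
  rewrite (bigD1 k) //= lerDl; apply: sumr_ge0 => *; exact: e0.
have step5 : \sum_y \sum_(k < m) e k y <= B.
  rewrite exchange_big /=; apply: ler_sum => k _.
  rewrite /e (@marg _ _ _ k (fun i s => (P i s == 0)%:R * P' i s) P'); last first.
    by move=> i _; exact: P'1.
  apply: le_trans (_ : \sum_(s : S k) xi' k <= _).
    apply: ler_sum => s _; case: eqP => h.
      rewrite mul1r; have := hclose k s.
      by rewrite h mul0r sqrtr0 add0r subr0 ger0_norm.
    by rewrite mul0r; exact: ltW.
  by rewrite sumr_const mulr_natr.
have step6 : \sum_(k < m) \sum_(s : S k) `|P k s - P' k s| <= A + B.
  rewrite /A /B -big_split /=; apply: ler_sum => k _.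
  apply: le_trans (_ : \sum_(s : S k) (Num.sqrt (P k s * xi k) + xi' k) <= _).
    by apply: ler_sum => s _; rewrite distrC.
  by rewrite big_split /= sumr_const mulr_natr.
have step7 : forall y, `|prodMeasure P y - prodMeasure P' y| * f y
    <= Ms * `|prodMeasure P y - prodMeasure P' y| + M * \sum_(k < m) e k y.
  move=> y; case: (boolP (in_prod_supp P y)) => hs.
    have hfy : f y <= Ms by rewrite /Ms; exact: le_bigmax_cond.
    apply: ler_wpDr; first by apply: mulr_ge0 => //; apply: sumr_ge0 => *; exact: e0.
    by rewrite mulrC; apply: ler_wpM2r.
  case: (step4 y hs) => hP0 hP'le.
  have hP'0 : 0 <= prodMeasure P' y by apply: prodr_ge0.
  rewrite hP0 sub0r normrN ger0_norm //.
  apply: ler_wpDl; first by apply: mulr_ge0.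
  rewrite mulrC; apply: ler_pM => //; exact: le_bigmax.
apply: le_trans (_ : \sum_y (Ms * `|prodMeasure P y - prodMeasure P' y|
    + M * \sum_(k < m) e k y) <= _); first exact: ler_sum.
rewrite big_split /= -!mulr_sumr.
have a1 := ler_wpM2l Ms0 (le_trans step3 step6).
have a2 := ler_wpM2l M0 step5.
have a3 := ler_wpM2r B0 MsM.
have a4 : 0 <= M * B by apply: mulr_ge0.
rewrite mulrDr in a1.
rewrite -mulrA.
lra.
Qed.
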